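(* Let $\Omega$ be the shift-orbit closure of a Sturmian word, with characteristic word $\tilde\omega$, and let $\omega,\omega'\in\Omega$ be distinct with $T^{n_0}(\omega)=T^{n_0}(\omega')=\tilde\omega$ for some $n_0\ge1$. Then for every factor $u$ of elements of $\Omega$ and every non-principal ultrafilter $p\in\beta\mathbb N$, $\omega|_u\in p$ if and only if $\omega'|_u\in p$. In particular $p^*(\omega)=p^*(\omega')$.
   Context: A Sturmian word is an infinite word over $\{0,1\}$ having exactly $k+1$ distinct factors of length $k$ for every $k\ge0$. $T$ is the shift, $\Omega$ the shift-orbit closure; $\tilde\omega$ is the unique element of $\Omega$ all of whose prefixes $v$ are left special ($0v$, $1v$ both factors). $\omega|_u=\{n\in\mathbb N:\omega_n\cdots\omega_{n+|u|-1}=u\}$. $\beta\mathbb N$ is the set of ultrafilters on $\mathbb N$; for $p\in\beta\mathbb N$, $p^*(\omega)$ is the unique infinite word such that a finite word $u$ is a prefix of $p^*(\omega)$ iff $\omega|_u\in p$. *)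

(* Defs.v *)
(* Alphabet {0,1} is encoded as bool: false = 0, true = 1. *)
From Stdlib Require Import Arith List Classical.
Import ListNotations.

Definition word := nat -> bool.

Definition shiftn (n : nat) (w : word) : word := fun i => w (n + i).

Definition occurs_at (w : word) (u : list bool) (n : nat) : Prop :=
  forall i, i < length u -> w (n + i) = nth i u false.

Definition prefix (u : list bool) (w : word) : Prop := occurs_at w u 0.

Definition factor (w : word) (u : list bool) : Prop := exists n, occurs_at w u n.

Definition sturmian (x : word) : Prop :=
  forall k, exists l : list (list bool),
    NoDup l /\ length l = S k /\
    forall u, In u l <-> (length u = k /\ factor x u).

(* Shift-orbit closure of x in {0,1}^N (product topology):
   w is in the closure iff every initial segment of w agrees with
   some T^n x on that segment. *)
Definition orbit_closure (x : word) (w : word) : Prop :=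
  forall m, exists n, forall i, i < m -> w i = shiftn n x i.

Definition factor_of_Omega (Omega : word -> Prop) (u : list bool) : Prop :=
  exists w, Omega w /\ factor w u.

Definition left_special (Omega : word -> Prop) (v : list bool) : Prop :=
  factor_of_Omega Omega (false :: v) /\ factor_of_Omega Omega (true :: v).

Definition characteristic (Omega : word -> Prop) (wt : word) : Prop :=
  Omega wt /\ forall v, prefix v wt -> left_special Omega v.

(* omega|_u = { n : omega_n ... omega_{n+|u|-1} = u } as a predicate on nat. *)
Definition occ (w : word) (u : list bool) : nat -> Prop := occurs_at w u.

Definition ultrafilter (p : (nat -> Prop) -> Prop) : Prop :=
  (~ p (fun _ => False)) /\
  (forall A B : nat -> Prop, p A -> (forall n, A n -> B n) -> p B) /\
  (forall A B : nat -> Prop, p A -> p B -> p (fun n => A n /\ B n)) /\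
  (forall A : nat -> Prop, p A \/ p (fun n => ~ A n)).

Definition nonprincipal (p : (nat -> Prop) -> Prop) : Prop :=
  forall k, ~ p (fun n => n = k).

Definition is_pstar (p : (nat -> Prop) -> Prop) (w z : word) : Prop :=
  forall u, prefix u z <-> p (occ w u).

(* Main.v *)
Require Import Defs.
From Stdlib Require Import Arith List Classical Lia.

Lemma uf_split (p : (nat -> Prop) -> Prop) (A B : nat -> Prop) :
  ultrafilter p -> p (fun n => A n \/ B n) -> p A \/ p B.
Proof.
  intros [H0 [Hm [Hi Hc]]] HAB.
  destruct (Hc A) as [HA|HA]; [now left|].
  destruct (Hc B) as [HB|HB]; [now right|].
  exfalso; apply H0.
  pose proof (Hi _ _ (Hi _ _ HA HB) HAB) as H.
  apply (Hm _ _ H). intros n [[a b] [c|c]]; tauto.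
Qed.

Lemma uf_fin (p : (nat -> Prop) -> Prop) :
  ultrafilter p -> nonprincipal p -> forall k, ~ p (fun n => n < k).
Proof.
  intros Hu Hn k. induction k as [|k IH]; intro H.
  - destruct Hu as [H0 [Hm _]]. apply H0. apply (Hm _ _ H). intros; lia.
  - destruct Hu as [H0 [Hm R]] eqn:E.
    assert (H' : p (fun n => n < k \/ n = k)).
    { apply (Hm _ _ H). intros; lia. }
    destruct (uf_split p _ _ Hu H') as [h|h]; [exact (IH h)| exact (Hn k h)].
Qed.

Lemma uf_cofin (p : (nat -> Prop) -> Prop) (A B : nat -> Prop) k :
  ultrafilter p -> nonprincipal p -> (forall n, k <= n -> A n -> B n) -> p A -> p B.
Proof.
  intros Hu Hn Hab HA. pose proof (uf_fin p Hu Hn k) as Hf.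
  destruct Hu as [H0 [Hm [Hi Hc]]].
  destruct (Hc (fun n => n < k)) as [h|h]; [contradiction|].
  apply (Hm _ _ (Hi _ _ HA h)). intros n [a b]. apply Hab; [lia|assumption].
Qed.

Theorem mainTheorem15 (x : word) (wt w w' : word) (n0 : nat) :
  sturmian x ->
  characteristic (orbit_closure x) wt ->
  orbit_closure x w -> orbit_closure x w' ->
  w <> w' ->
  1 <= n0 ->
  (forall i, shiftn n0 w i = wt i) ->
  (forall i, shiftn n0 w' i = wt i) ->
  forall p : (nat -> Prop) -> Prop,
    ultrafilter p -> nonprincipal p ->
    (forall u, factor_of_Omega (orbit_closure x) u ->
       (p (occ w u) <-> p (occ w' u))) /\
    (forall z, is_pstar p w z <-> is_pstar p w' z).
Proof.
  intros _ _ _ _ _ _ Hw Hw' p Hu Hn.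
  assert (Heq : forall j, n0 <= j -> w j = w' j).
  { intros j Hj. replace j with (n0 + (j - n0)) by lia.
    pose proof (Hw (j - n0)) as a. pose proof (Hw' (j - n0)) as b.
    unfold shiftn in a, b. congruence. }
  assert (G : forall u, p (occ w u) <-> p (occ w' u)).
  { intro u; split; apply uf_cofin with (k := n0); auto;
      unfold occ, occurs_at; intros n Hk H i Hi.
    - rewrite <- Heq by lia. auto.
    - rewrite Heq by lia. auto. }
  split.
  - intros u _; apply G.
  - intro z; unfold is_pstar; split; intros H u; rewrite H; [|symmetry]; apply G.
Qed.
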